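(* Let $n \ge 1$, let $f \in \mathbb{C}^n$ be a unit vector ($\|f\|_2 = 1$), and let $H, H' \in \mathbb{C}^{n\times n}$ be Hermitian matrices. Then \[ W_1\big(\mu_f^{H}, \mu_f^{H'}\big) \le n\,\|H - H'\|_2 . \]
   Context: For a Hermitian matrix $H \in \mathbb{C}^{n\times n}$, let $\mathrm{spec}(H)$ be its set of distinct eigenvalues and, for $\lambda \in \mathrm{spec}(H)$, let $P_\lambda$ be the orthogonal projection onto the $\lambda$-eigenspace. For a unit vector $f\in\mathbb{C}^n$, the power spectrum of $f$ with respect to $H$ is the discrete probability measure on $\mathbb{R}$ \[ \mu_f^H = \sum_{\lambda \in \mathrm{spec}(H)} \langle f, P_\lambda f\rangle\, \delta_\lambda \] (equivalently $\sum_{i=1}^n |\langle \phi_i, f\rangle|^2 \delta_{\lambda_i}$ for any orthonormal eigenbasis $\phi_i$ with eigenvalues $\lambda_i$). $W_1$ denotes the 1-Wasserstein distance between probability measures on $\mathbb{R}$ (with cost $|s-t|$), and $\|\cdot\|_2$ is the operator (spectral) norm. *)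

(* Defs.v *)
From HB Require Import structures.
From mathcomp Require Import all_boot all_order all_algebra.
From mathcomp Require Import all_classical all_reals all_analysis.
From mathcomp.real_closed Require Import complex.

Set Implicit Arguments.
Unset Strict Implicit.
Unset Printing Implicit Defensive.

Import Order.TTheory GRing.Theory Num.Theory.
Local Open Scope ring_scope.
Local Open Scope classical_set_scope.

Section Defs.
Variable R : realType.
Local Notation C := R[i].

Definition cmod2 (z : C) : R := complex.Re z ^+ 2 + complex.Im z ^+ 2.

Definition vnorm {n : nat} (v : 'cV[C]_n) : R :=
  Num.sqrt (\sum_(k < n) cmod2 (v k 0)).

Definition cdot {n : nat} (u v : 'cV[C]_n) : C :=
  \sum_(k < n) (u k 0)^* * v k 0.

Definition opnorm {n : nat} (A : 'M[C]_n) : R :=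
  sup [set vnorm (A *m v) | v in [set v : 'cV[C]_n | vnorm v = 1]].

Definition orthonormal_eigenbasis {n : nat} (H : 'M[C]_n)
    (phi : 'I_n -> 'cV[C]_n) (lam : 'I_n -> R) : Prop :=
  (forall i j : 'I_n, cdot (phi i) (phi j) = (i == j)%:R) /\
  (forall i : 'I_n, H *m phi i = Complex (lam i) 0 *: phi i).

Definition power_spectrum {n : nat} (f : 'cV[C]_n)
    (phi : 'I_n -> 'cV[C]_n) (lam : 'I_n -> R) : set R -> \bar R :=
  fun A => (\sum_(i < n) (cmod2 (cdot (phi i) f))%:E * \d_(lam i) A)%E.

Definition coupling (mu nu : set R -> \bar R) (P : probability (R * R)%type R)
    : Prop :=
  forall A : set R, measurable A ->
    P (fst @^-1` A) = mu A /\ P (snd @^-1` A) = nu A.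

Definition W1 (mu nu : set R -> \bar R) : \bar R :=
  ereal_inf [set (\int[P]_z (`|z.1 - z.2|)%:E)%E
            | P in [set P : probability (R * R)%type R | coupling mu nu P]].

End Defs.

(* Main.v *)
Require Import Defs.
From HB Require Import structures.
From mathcomp Require Import all_boot all_order all_algebra.
From mathcomp Require Import all_classical all_reals all_analysis.
From mathcomp.real_closed Require Import complex.
From mathcomp Require Import measurable_realfun.
From mathcomp Require Import ring lra.
Import Order.TTheory GRing.Theory Num.Theory.
Local Open Scope ring_scope.

Module Helpers.
Set Implicit Arguments.
Unset Strict Implicit.
Unset Printing Implicit Defensive.
Local Open Scope ring_scope.

Module Tr.
Section transport.
Variables (R : realFieldType) (I J : finType) (x : I -> R) (y : J -> R).

Definition tcost (s : I -> J -> R) := \sum_a \sum_b `|s a b| * `|x a - y b|.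

Definition dl (a : I) (b : J) (u : I) (v : J) : R := ((u == a) && (v == b))%:R.

Lemma sum_dl_row a b u : \sum_v dl a b u v = (u == a)%:R.
Proof.
rewrite /dl; case: (u == a) => /=; last by rewrite big1.
by rewrite (bigD1 b) //= eqxx big1 ?addr0 // => v /negbTE ->.
Qed.

Lemma sum_dl_col a b v : \sum_u dl a b u v = (v == b)%:R.
Proof.
rewrite /dl; case: (v == b) => /=; last by rewrite big1 // => u _; rewrite andbF.
by rewrite (bigD1 a) //= eqxx big1 ?addr0 // => u /negbTE ->.
Qed.

Lemma sum_dl_w a b (F : I -> J -> R) : \sum_u \sum_v dl a b u v * F u v = F a b.
Proof.
rewrite (bigD1 a) //= [X in _ + X]big1 ?addr0; last first.
  by move=> u /negbTE ua; rewrite big1 // => v _; rewrite /dl ua mul0r.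
rewrite (bigD1 b) //= [X in _ + X]big1 ?addr0; last first.
  by move=> v /negbTE vb; rewrite /dl vb andbF mul0r.
by rewrite /dl !eqxx mul1r.
Qed.

Definition swap (s : I -> J -> R) i j k l t u v :=
  s u v + t * dl i j u v - t * dl i k u v - t * dl l j u v + t * dl l k u v.

Lemma swap_row s i j k l t u : \sum_v swap s i j k l t u v = \sum_v s u v.
Proof.
rewrite /swap big_split /= sumrB sumrB big_split /= -!mulr_sumr !sum_dl_row.
by ring.
Qed.

Lemma swap_col s i j k l t v : \sum_u swap s i j k l t u v = \sum_u s u v.
Proof.
rewrite /swap big_split /= sumrB sumrB big_split /= -!mulr_sumr !sum_dl_col.
by ring.
Qed.

Section swap_props.
Variables (s : I -> J -> R) (i : I) (j : J) (k : J) (l : I) (t : R).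
Hypotheses (sij : s i j < 0) (sik : 0 < s i k) (slj : 0 < s l j)
  (t0 : 0 <= t) (t1 : t <= - s i j) (t2 : t <= s i k) (t3 : t <= s l j).

Let kj : k != j.
Proof. by apply/eqP => e; move: sik; rewrite e => /(lt_trans sij); rewrite ltxx. Qed.
Let li : l != i.
Proof. by apply/eqP => e; move: slj; rewrite e => /(lt_trans sij); rewrite ltxx. Qed.

Let il : (i == l) = false. Proof. by rewrite eq_sym (negbTE li). Qed.
Let li' : (l == i) = false. Proof. exact: negbTE li. Qed.
Let jk : (j == k) = false. Proof. by rewrite eq_sym (negbTE kj). Qed.
Let kj' : (k == j) = false. Proof. exact: negbTE kj. Qed.

Ltac L := move: sij sik slj t0 t1 t2 t3; lra.
Ltac simp := rewrite ?eqxx ?il ?li' ?kj' ?jk /= ?mulr0 ?mulr1 ?subr0 ?addr0.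

Lemma swap_abs u v :
  `|swap s i j k l t u v| <=
  `|s u v| - t * dl i j u v - t * dl i k u v - t * dl l j u v + t * dl l k u v.
Proof.
rewrite /swap /dl.
have [->|ui] := eqVneq u i.
  have [->|vj] := eqVneq v j.
    simp; rewrite (ltr0_norm sij) ler0_norm; L.
  have [->|vk] := eqVneq v k.
    simp; rewrite (gtr0_norm sik) ger0_norm; L.
  simp; L.
have [->|ul] := eqVneq u l.
  have [->|vj] := eqVneq v j.
    simp; rewrite (gtr0_norm slj) ger0_norm; L.
  have [->|vk] := eqVneq v k.
    simp; have := ler_normD (s l k) t; rewrite (ger0_norm t0); L.
  simp; L.
simp; L.
Qed.

Lemma swap_cost : tcost (swap s i j k l t) <= tcost s.
Proof.
apply: (@le_trans _ _ (\sum_a \sum_b (`|s a b| - t * dl i j a b - t * dl i k a b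
   - t * dl l j a b + t * dl l k a b) * `|x a - y b|)).
  apply: ler_sum => a _; apply: ler_sum => b _.
  by apply: ler_wpM2r => //; exact: swap_abs.
have E : forall (F : I -> J -> R) (G : I -> J -> R),
    \sum_a \sum_b (F a b + G a b) = \sum_a \sum_b F a b + \sum_a \sum_b G a b.
  by move=> F G; rewrite -big_split /=; apply: eq_bigr => a _; rewrite big_split.
have E2 : forall (F : I -> J -> R) (G : I -> J -> R),
    \sum_a \sum_b (F a b - G a b) = \sum_a \sum_b F a b - \sum_a \sum_b G a b.
  by move=> F G; rewrite -sumrB /=; apply: eq_bigr => a _; rewrite sumrB.
have E3 : forall a0 b0, \sum_a \sum_b t * dl a0 b0 a b * `|x a - y b| = t * `|x a0 - y b0|.
  move=> a0 b0; rewrite -(sum_dl_w a0 b0 (fun a b => `|x a - y b|)) mulr_sumr.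
  by apply: eq_bigr => a _; rewrite mulr_sumr; apply: eq_bigr => b _; rewrite mulrA.
under eq_bigr => a _ do under eq_bigr => b _ do rewrite !mulrDl !mulNr.
rewrite E E2 E2 E2 !E3.
have tri : `|x l - y k| <= `|x l - y j| + `|x i - y j| + `|x i - y k|.
  rewrite (_ : x l - y k = (x l - y j) - (x i - y j) + (x i - y k)); last by ring.
  apply: (le_trans (ler_normD _ _)); rewrite lerD2r.
  by apply: (le_trans (ler_normB _ _)).
rewrite /tcost; have := t1; have := t2; have := t3; have := t0; nra.
Qed.

Lemma swap_neg u v : swap s i j k l t u v < 0 -> s u v < 0.
Proof.
rewrite /swap /dl.
have [->|ui] := eqVneq u i.
  have [->|vj] := eqVneq v j; first by [].
  have [->|vk] := eqVneq v k.
    simp; L.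
  simp; L.
have [->|ul] := eqVneq u l.
  have [->|vj] := eqVneq v j.
    simp; L.
  have [->|vk] := eqVneq v k.
    simp; L.
  simp; L.
simp; L.
Qed.

Lemma swap_ij : swap s i j k l t i j = s i j + t.
Proof. by rewrite /swap /dl; simp. Qed.

Lemma swap_ik : swap s i j k l t i k = s i k - t.
Proof. by rewrite /swap /dl; simp. Qed.

Lemma swap_lj : swap s i j k l t l j = s l j - t.
Proof. by rewrite /swap /dl; simp. Qed.

Lemma swap_rowi b : b != j -> swap s i j k l t i b <= s i b.
Proof.
move=> bj; rewrite /swap /dl (negbTE bj); simp.
case: (b == k); simp; L.
Qed.

Lemma swap_colj a : a != i -> swap s i j k l t a j <= s a j.
Proof.
move=> ai; rewrite /swap /dl (negbTE ai); simp.
case: (a == l); simp; L.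
Qed.

End swap_props.

Lemma elim_neg s i j : s i j < 0 -> (forall a, 0 <= \sum_b s a b) ->
  (forall b, 0 <= \sum_a s a b) ->
  exists s', [/\ (forall a, \sum_b s' a b = \sum_b s a b),
    (forall b, \sum_a s' a b = \sum_a s a b), tcost s' <= tcost s &
    (forall a b, s' a b < 0 -> s a b < 0 /\ (a, b) != (i, j))].
Proof.
move=> sij0 hr0 hc0.
pose K (s : I -> J -> R) := addn #|[set b | 0 < s i b]| #|[set a | 0 < s a j]|.
have : (K s < (K s).+1)%N by [].
move: {2}((K s).+1) => N.
elim: N s sij0 hr0 hc0 => [|N IH] s sij hr hc hK //.
have [k sik] : exists k, 0 < s i k.
  case: (boolP [exists k, 0 < s i k]) => [/existsP//|/existsPn H].
  have := hr i; rewrite (bigD1 j) //=.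
  have : \sum_(b | b != j) s i b <= 0.
    by apply: sumr_le0 => b _; rewrite leNgt; exact: H b.
  move: sij; lra.
have [l slj] : exists l, 0 < s l j.
  case: (boolP [exists l, 0 < s l j]) => [/existsP//|/existsPn H].
  have := hc j; rewrite (bigD1 i) //=.
  have : \sum_(a | a != i) s a j <= 0.
    by apply: sumr_le0 => a _; rewrite leNgt; exact: H a.
  move: sij; lra.
have [tcase|tcase] := boolP ((- s i j <= s i k) && (- s i j <= s l j)).
  case/andP: tcase => h1 h2.
  have t0 : 0 <= - s i j by move: sij; lra.
  exists (swap s i j k l (- s i j)); split.
  - by move=> a; rewrite swap_row.
  - by move=> b; rewrite swap_col.
  - exact: swap_cost.
  - move=> a b neg; split; first exact: (swap_neg sij sik slj t0 _ h1 h2 neg).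
    apply/eqP => -[ea eb]; move: neg; rewrite ea eb swap_ij //.
    by rewrite subrr ltxx.
pose t := if s i k <= s l j then s i k else s l j.
have t2 : t <= s i k by rewrite /t; case: ifP => // /negbT; rewrite -ltNge => /ltW.
have t3 : t <= s l j by rewrite /t; case: ifP.
have t0 : 0 <= t by rewrite /t; case: ifP => _; exact: ltW.
have t1' : t < - s i j.
  move: tcase; rewrite negb_and -!ltNge => /orP[] h.
    exact: le_lt_trans t2 h.
  exact: le_lt_trans t3 h.
have t1 : t <= - s i j by exact: ltW.
have tkl : t = s i k \/ t = s l j by rewrite /t; case: ifP => _; [left|right].
set s1 := swap s i j k l t.
have s1ij : s1 i j < 0 by rewrite /s1 swap_ij //; move: t1'; lra.
have kj : k != j.
  by apply/eqP => e; move: sik; rewrite e => /(lt_trans sij); rewrite ltxx.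
have li : l != i.
  by apply/eqP => e; move: slj; rewrite e => /(lt_trans sij); rewrite ltxx.
have subr : [set b | 0 < s1 i b] \subset [set b | 0 < s i b].
  apply/fintype.subsetP => b; rewrite !inE => h.
  have [ebj|bj] := eqVneq b j; first by move: h; rewrite ebj => /(lt_trans s1ij); rewrite ltxx.
  exact: lt_le_trans h (swap_rowi sij sik slj t0 t1 t2 t3 bj).
have subc : [set a | 0 < s1 a j] \subset [set a | 0 < s a j].
  apply/fintype.subsetP => a; rewrite !inE => h.
  have [eai|ai] := eqVneq a i; first by move: h; rewrite eai => /(lt_trans s1ij); rewrite ltxx.
  exact: lt_le_trans h (swap_colj sij sik slj t0 t1 t2 t3 ai).
have hK1 : (K s1 < N)%N.
  have r1 := subset_leq_card subr; have c1 := subset_leq_card subc.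
  have : (K s1 < K s)%N.
    case: tkl => et.
      have : (#|[set b | (0 < s1 i b)%R]| < #|[set b | (0 < s i b)%R]|)%N.
        apply: proper_card; apply/fintype.properP; split => //; exists k; rewrite !inE //.
        by rewrite /s1 swap_ik // et subrr ltxx.
      by move=> h; rewrite /K -addSn; apply: leq_add.
    have : (#|[set a | (0 < s1 a j)%R]| < #|[set a | (0 < s a j)%R]|)%N.
      apply: proper_card; apply/fintype.properP; split => //; exists l; rewrite !inE //.
      by rewrite /s1 swap_lj // et subrr ltxx.
    by move=> h; rewrite /K -addnS; apply: leq_add.
  by move=> h; apply: leq_trans h _; rewrite -ltnS.
have hr1 : forall a, 0 <= \sum_b s1 a b by move=> a; rewrite /s1 swap_row; exact: hr a.
have hc1 : forall b, 0 <= \sum_a s1 a b by move=> b; rewrite /s1 swap_col; exact: hc b.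
have [s' [h1 h2 h3 h4]] := IH s1 s1ij hr1 hc1 hK1.
exists s'; split.
- by move=> a; rewrite h1 /s1 swap_row.
- by move=> b; rewrite h2 /s1 swap_col.
- exact: le_trans h3 (swap_cost sij sik slj t0 t1 t2 t3).
- move=> a b /h4 [H1 H2]; split => //.
  exact: (swap_neg sij sik slj t0 t1 t2 t3 H1).
Qed.

Lemma transport s : (forall a, 0 <= \sum_b s a b) -> (forall b, 0 <= \sum_a s a b) ->
  exists p, [/\ (forall a b, 0 <= p a b), (forall a, \sum_b p a b = \sum_b s a b),
    (forall b, \sum_a p a b = \sum_a s a b) &
    \sum_a \sum_b p a b * `|x a - y b| <= tcost s].
Proof.
pose NS (s : I -> J -> R) := [set q : I * J | s q.1 q.2 < 0].
move=> hr0 hc0.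
have : (#|NS s| < #|NS s|.+1)%N by [].
move: {2}(#|NS s|.+1) => N.
elim: N s hr0 hc0 => [|N IH] s hr hc hN //.
case: (set_0Vmem (NS s)) => [e|[q]].
  exists s; split => //.
  - move=> a b; rewrite leNgt; apply/negP => h.
    have : (a, b) \in NS s by rewrite inE.
    by rewrite e inE.
  - by apply: ler_sum => a _; apply: ler_sum => b _; rewrite ler_wpM2r //; exact: ler_norm.
rewrite inE => hq.
have [s' [h1 h2 h3 h4]] := elim_neg hq hr hc.
have hN' : (#|NS s'| < N)%N.
  have : (#|NS s'| < #|NS s|)%N.
    apply: proper_card; apply/fintype.properP; split.
      apply/fintype.subsetP => -[a b]; rewrite !inE /= => /h4 [] //.
    exists q; first by rewrite inE.
    rewrite inE; apply/negP => /h4 [_].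
    by rewrite -surjective_pairing eqxx.
  by move=> h; apply: leq_trans h _; rewrite -ltnS.
have hr1 : forall a, 0 <= \sum_b s' a b by move=> a; rewrite h1; exact: hr a.
have hc1 : forall b, 0 <= \sum_a s' a b by move=> b; rewrite h2; exact: hc b.
have [p [p1 p2 p3 p4]] := IH s' hr1 hc1 hN'.
exists p; split => //.
- by move=> a; rewrite p2 h1.
- by move=> b; rewrite p3 h2.
- exact: le_trans p4 h3.
Qed.

End transport.

End Tr.
Export Tr.

Module Ms.
Local Open Scope classical_set_scope.
Section fd.
Local Open Scope ereal_scope.
Context d (T : measurableType d) (R : realType) (I : Type) (r : seq I)
  (w : I -> {nonneg R}) (x : I -> T).
Definition fd (A : set T) : \bar R := \sum_(i <- r) mscale (w i) (\d_(x i)) A.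

Let fd0 : fd set0 = 0. Proof. by rewrite /fd big1 // => i _; rewrite measure0. Qed.
Let fd_ge0 B : 0 <= fd B. Proof. by rewrite /fd; apply: sume_ge0 => i _; exact: measure_ge0. Qed.
Let fd_sigma_additive : semi_sigma_additive fd.
Proof.
move=> F mF tF mUF; rewrite [X in _ --> X](_ : _ =
    lim ((fun n => \sum_(0 <= i < n) fd (F i)) @ \oo)).
  by apply: is_cvg_ereal_nneg_natsum => k _; exact: fd_ge0.
rewrite nneseries_sum//; apply: eq_bigr => /= i _.
exact: measure_semi_bigcup.
Qed.
HB.instance Definition _ := isMeasure.Build _ _ _ fd fd0 fd_ge0 fd_sigma_additive.
End fd.

Lemma fd_integral d (T : measurableType d) (R : realType) (I : Type) (r : seq I)
  (w : I -> {nonneg R}) (x : I -> T) (f : T -> \bar R) :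
  measurable_fun [set: T] f -> (forall t, 0 <= f t)%E ->
  (\int[fd r w x]_t f t = \sum_(i <- r) (w i)%:num%:E * f (x i))%E.
Proof.
move=> mf f0; elim: r => [|a r IH].
  rewrite big_nil.
  rewrite (_ : fd [::] w x = mzero); first by rewrite integral_measure_zero.
  by apply/funext => A; rewrite /fd big_nil.
rewrite big_cons -IH.
rewrite (_ : fd (a :: r) w x = measure_add (mscale (w a) (\d_(x a))) (fd r w x)); last first.
  by apply/funext => A; rewrite measure_addE /fd big_cons.
rewrite ge0_integral_measure_add // ge0_integral_mscale // integral_dirac //.
by rewrite diracT mul1e.
Qed.

Section fdp.
Context d (T : measurableType d) (R : realType) (I : finType)
  (w : I -> {nonneg R}) (x : I -> T).
Definition fdp (hw : \sum_i (w i)%:num = 1) := fd (index_enum I) w x.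
Variable (hw : \sum_i (w i)%:num = 1).
HB.instance Definition _ := Measure.on (fdp hw).
Let fdp_setT : fdp hw setT = 1%E.
Proof.
rewrite /fdp /fd.
under eq_bigr => i _ do rewrite /mscale /= diracE in_setT mule1.
by rewrite sumEFin hw.
Qed.
HB.instance Definition _ := Measure_isProbability.Build _ _ _ (fdp hw) fdp_setT.
End fdp.

Lemma coupling_exists (R : realType) (n : nat) (lam lam' : 'I_n -> R)
  (w w' : 'I_n -> R) (p : 'I_n -> 'I_n -> R) :
  (forall i j, 0 <= p i j) -> (forall i, \sum_j p i j = w i) ->
  (forall j, \sum_i p i j = w' j) -> \sum_i w i = 1 ->
  (W1 (fun A => \sum_i (w i)%:E * \d_(lam i) A)
      (fun A => \sum_i (w' i)%:E * \d_(lam' i) A)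
   <= (\sum_i \sum_j p i j * `|lam i - lam' j|)%:E)%E.
Proof.
move=> p0 hw hw' hsum.
pose wt (q : ('I_n * 'I_n)%type) : {nonneg R} := NngNum (p0 q.1 q.2).
pose xt (q : ('I_n * 'I_n)%type) : (R * R)%type := (lam q.1, lam' q.2).
have hs : \sum_q (wt q)%:num = 1.
  rewrite -hsum /= -(pair_bigA _ (fun i j => p i j)) /=.
  by apply: eq_bigr => i _; rewrite hw.
pose PP : probability (R * R)%type R := fdp xt hs.
have HH : (W1 (fun A => \sum_i (w i)%:E * \d_(lam i) A) (fun A => \sum_i (w' i)%:E * \d_(lam' i) A) <= \int[PP]_z (`|z.1 - z.2|)%:E)%E.
  rewrite /W1; apply: ereal_inf_lbound; exists PP => //.
  move=> A mA; split.
  - rewrite /= /fdp /fd /= -(pair_bigA _ (fun i j => mscale (wt (i,j)) (\d_(xt (i,j))) _)) /=.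
    apply: eq_bigr => i _.
    have mf j : (xt (i,j) \in fst @^-1` A) = (lam i \in A).
      by apply/idP/idP => /set_mem H; apply/mem_set.
    under eq_bigr => j _ do rewrite /mscale /= diracE mf -EFinM.
    by rewrite diracE sumEFin -EFinM -mulr_suml hw.
  - rewrite /= /fdp /fd /= -(pair_bigA _ (fun i j => mscale (wt (i,j)) (\d_(xt (i,j))) _)) /=.
    rewrite exchange_big /=.
    apply: eq_bigr => j _.
    have mf i : (xt (i,j) \in snd @^-1` A) = (lam' j \in A).
      by apply/idP/idP => /set_mem H; apply/mem_set.
    under eq_bigr => i _ do rewrite /mscale /= diracE mf -EFinM.
    by rewrite diracE sumEFin -EFinM -mulr_suml hw'.
apply: (le_trans HH).
rewrite fd_integral //; last first.
  apply/measurable_EFinP; apply: measurableT_comp => //.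
  by apply: measurable_funB; [exact: measurable_fst|exact: measurable_snd].
under eq_bigr => q _ do rewrite -EFinM.
rewrite sumEFin lee_fin -(pair_bigA _ (fun i j => p i j * `|lam i - lam' j|)) /=.
done.
Qed.

End Ms.
Export Ms.

Module Cx.
Section C.
Variable R : realType.
Local Notation C := R[i].
Local Notation toC := (real_complex R).

Lemma conjE (a b : R) : (Complex a b : C)^* = Complex a (- b).
Proof. by []. Qed.

Lemma mulE (a b c d : R) : (Complex a b : C) * Complex c d = Complex (a * c - b * d) (a * d + b * c).
Proof. by []. Qed.

Lemma addE (a b c d : R) : (Complex a b : C) + Complex c d = Complex (a + c) (b + d).
Proof. by []. Qed.

Lemma normE (z : C) : `|z| = toC (Num.sqrt (cmod2 z)).
Proof. by rewrite normc_def. Qed.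

Lemma conj_mul_self (z : C) : z^* * z = toC (cmod2 z).
Proof. case: z => a b; rewrite conjE mulE /cmod2 /=; congr Complex; ring. Qed.


Definition cm (z : C) : R := Num.sqrt (@cmod2 R z).

Lemma cmod2_ge0 (z : C) : 0 <= cmod2 z.
Proof. by rewrite /cmod2 addr_ge0 // sqr_ge0. Qed.

Lemma cmod2M (x y : C) : cmod2 (x * y) = cmod2 x * cmod2 y.
Proof. by case: x => a b; case: y => c d; rewrite mulE /cmod2 /=; ring. Qed.

Lemma cmod2J (z : C) : cmod2 z^* = cmod2 z.
Proof. by case: z => a b; rewrite conjE /cmod2 /= sqrrN. Qed.

Lemma cm_ge0 (z : C) : 0 <= cm z.
Proof. exact: sqrtr_ge0. Qed.

Lemma cmM (x y : C) : cm (x * y) = cm x * cm y.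
Proof. by rewrite /cm cmod2M sqrtrM // cmod2_ge0. Qed.

Lemma cmJ (z : C) : cm z^* = cm z.
Proof. by rewrite /cm cmod2J. Qed.

Lemma cm_sqr (z : C) : cm z ^+ 2 = cmod2 z.
Proof. by rewrite /cm sqr_sqrtr // cmod2_ge0. Qed.

Lemma absRe_le_cm (z : C) : `|complex.Re z| <= cm z.
Proof.
rewrite /cm /cmod2 -sqrtr_sqr; apply: ler_wsqrtr.
by rewrite lerDl sqr_ge0.
Qed.

Lemma cm_toC (r : R) : cm (toC r) = `|r|.
Proof. by rewrite /cm /cmod2 /= expr0n /= addr0 sqrtr_sqr. Qed.

Lemma toC_cm (z : C) : toC (cm z) = `|z|.
Proof. by rewrite normE. Qed.

Lemma cm_sum (I : finType) (F : I -> C) : cm (\sum_i F i) <= \sum_i cm (F i).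
Proof.
suff : toC (cm (\sum_i F i)) <= toC (\sum_i cm (F i)) by rewrite lecR.
have -> : toC (\sum_i cm (F i)) = \sum_i `|F i|.
  by rewrite rmorph_sum; apply: eq_bigr => i _; exact: toC_cm.
rewrite toC_cm; exact: ler_norm_sum.
Qed.

Lemma cmD (x y : C) : cm (x + y) <= cm x + cm y.
Proof.
suff : toC (cm (x + y)) <= toC (cm x + cm y) by rewrite lecR.
have -> : toC (cm x + cm y) = `|x| + `|y|.
  by rewrite rmorphD; congr (_ + _); exact: toC_cm.
rewrite toC_cm.
exact: ler_normD.
Qed.

Lemma Re_add (x y : C) : complex.Re (x + y) = complex.Re x + complex.Re y.
Proof. by case: x; case: y. Qed.

Lemma Re_sum (I : finType) (F : I -> C) : complex.Re (\sum_i F i) = \sum_i complex.Re (F i).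
Proof. exact: (big_morph _ Re_add). Qed.

Lemma cmod2_sum0 n (v : 'cV[C]_n) k : cmod2 (v k 0) <= \sum_l cmod2 (v l 0).
Proof.
rewrite (bigD1 k) //= lerDl; apply: sumr_ge0 => l _; exact: cmod2_ge0.
Qed.

Lemma cdot_conj n (u v : 'cV[C]_n) : (cdot u v)^* = cdot v u.
Proof.
rewrite /cdot rmorph_sum; apply: eq_bigr => k _.
by rewrite rmorphM /= conjCK mulrC.
Qed.

Lemma cdot_self n (u : 'cV[C]_n) : cdot u u = toC (\sum_k cmod2 (u k 0)).
Proof.
by rewrite /cdot rmorph_sum; apply: eq_bigr => k _; rewrite conj_mul_self.
Qed.

Lemma cdotZr n (u v : 'cV[C]_n) a : cdot u (a *: v) = a * cdot u v.
Proof.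
by rewrite /cdot mulr_sumr; apply: eq_bigr => k _; rewrite mxE mulrCA.
Qed.

Lemma cdotZl n (u v : 'cV[C]_n) a : cdot (a *: u) v = a^* * cdot u v.
Proof.
by rewrite /cdot mulr_sumr; apply: eq_bigr => k _; rewrite mxE rmorphM mulrA.
Qed.

Lemma cdotBr n (u v w : 'cV[C]_n) : cdot u (v - w) = cdot u v - cdot u w.
Proof.
by rewrite /cdot -sumrB; apply: eq_bigr => k _; rewrite !mxE mulrBr.
Qed.

Lemma cdot_herm n (H : 'M[C]_n) (u v : 'cV[C]_n) :
  H \is hermsymmx -> cdot u (H *m v) = cdot (H *m u) v.
Proof.
move=> /is_hermitianmxP hH.
have hk k l : H k l = (H l k)^*.
  by rewrite {1}hH expr0 scale1r !mxE.
rewrite /cdot.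
under eq_bigr => k _ do rewrite mxE mulr_sumr.
under [RHS]eq_bigr => l _ do rewrite mxE rmorph_sum mulr_suml.
rewrite exchange_big /=; apply: eq_bigr => l _; apply: eq_bigr => k _.
by rewrite rmorphM hk; ring.
Qed.

Lemma parseval n (phi : 'I_n -> 'cV[C]_n) :
  (forall i j, cdot (phi i) (phi j) = (i == j)%:R) ->
  forall u v, \sum_i cdot u (phi i) * cdot (phi i) v = cdot u v.
Proof.
move=> on u v.
pose U : 'M[C]_n := \matrix_(k, i) phi i k 0.
pose V : 'M[C]_n := \matrix_(i, k) (phi i k 0)^*.
have VU : V *m U = 1%:M.
  apply/matrixP => i j; rewrite !mxE -on /cdot; apply: eq_bigr => k _; rewrite !mxE.
  done.
have UV := mulmx1C VU.
have key k l : \sum_i phi i k 0 * (phi i l 0)^* = (k == l)%:R.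
  have := congr1 (fun M : 'M[C]_n => M k l) UV; rewrite !mxE => <-.
  by apply: eq_bigr => i _; rewrite !mxE.
rewrite /cdot.
under eq_bigr => i _ do rewrite mulr_suml.
under eq_bigr => i _ do under eq_bigr => k _ do rewrite mulr_sumr.
rewrite exchange_big /=; apply: eq_bigr => k _.
rewrite exchange_big /=.
transitivity (\sum_l (u k 0)^* * v l 0 * (k == l)%:R).
  apply: eq_bigr => l _; rewrite -key mulr_sumr; apply: eq_bigr => i _.
  by ring.
rewrite (bigD1 k) //= eqxx mulr1 big1 ?addr0 // => l /negbTE.
by rewrite eq_sym => ->; rewrite mulr0.
Qed.

Lemma parseval_norm n (phi : 'I_n -> 'cV[C]_n) :
  (forall i j, cdot (phi i) (phi j) = (i == j)%:R) ->
  forall v, \sum_i cmod2 (cdot (phi i) v) = \sum_k cmod2 (v k 0).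
Proof.
move=> on v; apply: (@complexI R).
rewrite -/(toC _) -/(toC _) -cdot_self -(parseval on) rmorph_sum.
apply: eq_bigr => i _; rewrite -(cdot_conj (phi i) v). rewrite conj_mul_self. done.
Qed.

End C.

End Cx.
Export Cx.

Module Mn.
Section M.
Variable R : realType.
Local Notation C := R[i].
Local Notation toC := (real_complex R).

Lemma vnorm_sq n (v : 'cV[C]_n) : vnorm v ^+ 2 = \sum_k cmod2 (v k 0).
Proof. by rewrite /vnorm sqr_sqrtr // sumr_ge0 // => k _; exact: cmod2_ge0. Qed.

Lemma vnorm_ge0 n (v : 'cV[C]_n) : 0 <= vnorm v.
Proof. exact: sqrtr_ge0. Qed.

Lemma unit_sum n (v : 'cV[C]_n) : vnorm v = 1 -> \sum_k cmod2 (v k 0) = 1.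
Proof. by move=> h; rewrite -vnorm_sq h expr1n. Qed.

Lemma opnorm_ge n (A : 'M[C]_n) (v : 'cV[C]_n) : vnorm v = 1 ->
  vnorm (A *m v) <= opnorm A.
Proof.
move=> hv; rewrite /opnorm; apply: ub_le_sup; last by exists v.
exists (Num.sqrt (\sum_k (\sum_l cm (A k l)) ^+ 2)).
move=> y [w /= hw <-].
have hw1 : forall l, cm (w l 0) <= 1.
  move=> l; rewrite -sqrtr1 /cm; apply: ler_wsqrtr.
  by rewrite -(unit_sum hw); exact: cmod2_sum0.
rewrite /vnorm; apply: ler_wsqrtr; apply: ler_sum => k _.
rewrite -cm_sqr; apply: lerXn2r; rewrite ?nnegrE ?cm_ge0 //.
  by apply: sumr_ge0 => l _; exact: cm_ge0.
rewrite mxE; apply: (le_trans (cm_sum _)); apply: ler_sum => l _.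
rewrite cmM; apply: ler_piMr => //; exact: cm_ge0.
Qed.

Lemma on_vnorm n (phi : 'I_n -> 'cV[C]_n) :
  (forall i j, cdot (phi i) (phi j) = (i == j)%:R) -> forall i, vnorm (phi i) = 1.
Proof.
move=> on i; rewrite /vnorm.
have : toC (\sum_k cmod2 (phi i k 0)) = toC 1.
  by rewrite -cdot_self on eqxx.
by move/complexI => ->; rewrite sqrtr1.
Qed.

Lemma amgm (d a z : R) : 0 < d -> a * z <= (d * a ^+ 2 + z ^+ 2 / d) / 2.
Proof.
move=> d0.
have : 0 <= (d * a - z) ^+ 2 / d by rewrite divr_ge0 // ?sqr_ge0 // ltW.
have e : (d * a - z) ^+ 2 / d = (d * a ^+ 2 + z ^+ 2 / d) - 2 * (a * z).
  by field; rewrite gt_eqF.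
rewrite e subr_ge0 => h.
rewrite ler_pdivlMr //; lra.
Qed.

End M.


End Mn.
Export Mn.
End Helpers.
Import Helpers.
Unset Implicit Arguments.
Set Strict Implicit.

Theorem theorem3p1 (R : realType) (n : nat) (f : 'cV[R[i]]_n)
    (H H' : 'M[R[i]]_n)
    (phi : 'I_n -> 'cV[R[i]]_n) (lam : 'I_n -> R)
    (phi' : 'I_n -> 'cV[R[i]]_n) (lam' : 'I_n -> R) :
  (1 <= n)%N ->
  vnorm f = 1 ->
  H \is hermsymmx -> H' \is hermsymmx ->
  orthonormal_eigenbasis H phi lam ->
  orthonormal_eigenbasis H' phi' lam' ->
  (W1 (power_spectrum f phi lam) (power_spectrum f phi' lam')
     <= (n%:R * opnorm (H - H'))%:E)%E.
Proof.
move=> hn hf hH hH' [on hev] [on' hev'].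
set d := opnorm (H - H').
pose al i := cdot (phi i) f.
pose be j := cdot (phi' j) f.
pose D i j := cdot (phi i) (phi' j).
pose sg i j := complex.Re ((al i)^* * D i j * be j).
have hrow i : \sum_j sg i j = cmod2 (al i).
  rewrite /sg -Re_sum.
  under eq_bigr do rewrite -mulrA.
  rewrite -mulr_sumr (parseval on') conj_mul_self.
  done.
have hcol j : \sum_i sg i j = cmod2 (be j).
  rewrite /sg -Re_sum -mulr_suml.
  have -> : \sum_i (al i)^* * D i j = (be j)^*.
    rewrite /be cdot_conj -(parseval on); apply: eq_bigr => i _.
    by rewrite /al cdot_conj.
  by rewrite conj_mul_self.
have hal : \sum_i cmod2 (al i) = 1.
  by rewrite (parseval_norm on) unit_sum.
have hbe : \sum_j cmod2 (be j) = 1.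
  by rewrite (parseval_norm on') unit_sum.
have hr0 : forall a, 0 <= \sum_b sg a b by move=> a; rewrite hrow; exact: cmod2_ge0.
have hc0 : forall b, 0 <= \sum_a sg a b by move=> b; rewrite hcol; exact: cmod2_ge0.
have [p [p0 p1 p2 p3]] := transport lam lam' hr0 hc0.
have hw i : \sum_j p i j = cmod2 (al i) by rewrite p1 hrow.
have hw' j : \sum_i p i j = cmod2 (be j) by rewrite p2 hcol.
have CE := @coupling_exists R n lam lam' (fun i => cmod2 (al i)) (fun j => cmod2 (be j)) p p0 hw hw' hal.
apply: le_trans CE _.
rewrite lee_fin; apply: (le_trans p3).
pose Ec i j := cdot (phi i) ((H - H') *m phi' j).
have hEc i j : Ec i j = real_complex R (lam i - lam' j) * D i j.
  rewrite /Ec mulmxBl cdotBr cdot_herm // hev hev' cdotZl cdotZr conjE oppr0.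
  by rewrite rmorphB /= mulrBl.
have hE j : \sum_i cmod2 (Ec i j) <= d ^+ 2.
  rewrite /Ec (parseval_norm on) -vnorm_sq; apply: lerXn2r.
  - by rewrite nnegrE vnorm_ge0.
  - by rewrite nnegrE; apply: le_trans (vnorm_ge0 _) (opnorm_ge _ (on_vnorm on' j)).
  - exact: opnorm_ge (on_vnorm on' j).
have hterm i j : `|sg i j| * `|lam i - lam' j| <= cm (al i) * (cm (be j) * cm (Ec i j)).
  apply: le_trans (ler_wpM2r (normr_ge0 _) (absRe_le_cm _)) _.
  rewrite hEc !cmM cmJ cm_toC le_eqVlt; apply/orP; left; apply/eqP; ring.
have j0 : 'I_n := Ordinal hn.
have d0 : 0 <= d by apply: le_trans (vnorm_ge0 _) (opnorm_ge _ (on_vnorm on' j0)).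
have hn1 : 1 <= n%:R :> R by rewrite ler1n.
rewrite /tcost.
have [dz|dnz] := eqVneq d 0.
  rewrite dz mulr0.
  have cE i j : cm (Ec i j) = 0.
    have : cmod2 (Ec i j) <= 0.
      have := hE j; rewrite dz expr0n /= => hs; apply: le_trans hs.
      by rewrite (bigD1 i) //= lerDl; apply: sumr_ge0 => k _; exact: cmod2_ge0.
    move=> h; have -> : cm (Ec i j) = Num.sqrt 0.
      by rewrite /cm; congr Num.sqrt; apply/le_anti; rewrite h cmod2_ge0.
    exact: sqrtr0.
  apply: (@le_trans _ _ (\sum_i \sum_j cm (al i) * (cm (be j) * cm (Ec i j)))).
    by apply: ler_sum => i _; apply: ler_sum => j _; exact: hterm.
  by rewrite big1 // => i _; rewrite big1 // => j _; rewrite cE !mulr0.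
have dpos : 0 < d by rewrite lt_def dnz d0.
apply: (@le_trans _ _ (\sum_i \sum_j (d * cmod2 (al i) / 2 + (cmod2 (be j) * cmod2 (Ec i j)) / (2 * d)))).
  apply: ler_sum => i _; apply: ler_sum => j _.
  apply: le_trans (hterm i j) _.
  apply: le_trans (amgm _ _ dpos) _.
  rewrite exprMn !cm_sqr le_eqVlt; apply/orP; left; apply/eqP; field.
  by rewrite gt_eqF.
have E1 : \sum_(i < n) \sum_(j < n) d * cmod2 (al i) / 2 = n%:R * d / 2.
  transitivity (\sum_(i : 'I_n) (n%:R * d / 2) * cmod2 (al i)).
    by apply: eq_bigr => i _; rewrite sumr_const card_ord -mulr_natl; ring.
  by rewrite -mulr_sumr hal mulr1.
have E2 : \sum_i \sum_j (cmod2 (be j) * cmod2 (Ec i j)) / (2 * d) <= d / 2.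
  rewrite exchange_big /=.
  apply: (@le_trans _ _ (\sum_j cmod2 (be j) / (2 * d) * d ^+ 2)).
    apply: ler_sum => j _.
    have -> : \sum_i cmod2 (be j) * cmod2 (Ec i j) / (2 * d) =
        cmod2 (be j) / (2 * d) * \sum_i cmod2 (Ec i j).
      by rewrite mulr_sumr; apply: eq_bigr => i _; ring.
    apply: ler_wpM2l (hE j).
    by rewrite divr_ge0 ?cmod2_ge0 // mulr_ge0.
  have -> : \sum_j cmod2 (be j) / (2 * d) * d ^+ 2 = d / 2 * \sum_j cmod2 (be j).
    rewrite mulr_sumr; apply: eq_bigr => j _; field.
    by rewrite gt_eqF.
  by rewrite hbe mulr1.
under eq_bigr => i _ do rewrite big_split.
rewrite big_split /= E1; move: E2; nra.
Qed.
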